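(* Let $q$ be a prime power and let $n, r, d$ be integers with $1 \le d \le r \le n/2$. Let $\mathcal{E}^0 \subseteq E_r(q,n)$ be the lifting $\{I({\bf C}) : {\bf C} \in \mathcal{M}\}$ of an MRD code $\mathcal{M} \subseteq \mathrm{GF}(q)^{r \times (n-r)}$ with minimum rank distance $d$ and cardinality $q^{(n-r)(r-d+1)}$. For $1 \le k \le \lfloor r/d \rfloor$ let: - $\mathcal{C}^k \subseteq \mathrm{GF}(q)^{(r-kd)\times kd}$ be an MRD code with minimum rank distance $d$ if $k \le \lfloor r/d\rfloor - 1$, and $\mathcal{C}^{\lfloor r/d \rfloor} = \{{\bf 0}\} \subseteq \mathrm{GF}(q)^{(r - \lfloor r/d\rfloor d)\times \lfloor r/d \rfloor d}$; - $\mathcal{D}^k \subseteq \mathrm{GF}(q)^{r \times (n-r-kd)}$ be an MRD code with minimum rank distance $d$ if $k \le \lfloor (n-r)/d \rfloor - 1$, and $\mathcal{D}^{\lfloor (n-r)/d\rfloor} = \{{\bf 0}\}\subseteq \mathrm{GF}(q)^{r \times (n-r-\lfloor (n-r)/d\rfloor d)}$ (when $\lfloor (n-r)/d\rfloor = \lfloor r/d \rfloor$, this is the case $k = \lfloor r/d\rfloor$). For ${\bf C} \in \mathcal{C}^k$ and ${\bf D} \in \mathcal{D}^k$, write ${\bf D} = \begin{pmatrix} {\bf D}' \\ {\bf D}''\end{pmatrix}$ with ${\bf D}'$ consisting of the first $r-kd$ rows and ${\bf D}''$ of the last $kd$ rows, and let $E^k_{{\bf C},{\bf D}} \in E_r(q,n)$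 be the row space of the $r\times n$ matrix $$\begin{pmatrix} {\bf I}_{r-kd} & {\bf C} & {\bf 0}_{(r-kd)\times kd} & {\bf D}' \\ {\bf 0}_{kd \times (r-kd)} & {\bf 0}_{kd\times kd} & {\bf I}_{kd} & {\bf D}'' \end{pmatrix}.$$ Let $\mathcal{E}^k = \{E^k_{{\bf C},{\bf D}} : {\bf C} \in \mathcal{C}^k, {\bf D}\in \mathcal{D}^k\}$ and $\mathcal{E} = \bigcup_{k=0}^{\lfloor r/d\rfloor} \mathcal{E}^k$. Then $\mathcal{E}$ has minimum injection distance $d$, i.e. the minimum of $d_{\mathrm{I}}(U,V)$ over distinct $U,V \in \mathcal{E}$ equals $d$.
   Context: $E_r(q,n)$ is the set of $r$-dimensional subspaces of $\mathrm{GF}(q)^n$. For a matrix ${\bf M}$, $R({\bf M})$ is its row space; for ${\bf C} \in \mathrm{GF}(q)^{r\times(n-r)}$ the lifting is $I({\bf C}) = R({\bf I}_r \mid {\bf C}) \in E_r(q,n)$. The injection distance is $d_{\mathrm{I}}(U,V) = \dim(U+V) - \min\{\dim U,\dim V\}$. The rank distance between matrices is $d_{\mathrm{R}}({\bf C},{\bf D}) = \mathrm{rk}({\bf C}-{\bf D})$. An MRD code in $\mathrm{GF}(q)^{m\times N}$ with minimum rank distance $d$ is a set of matrices with minimum rank distance $d$ and the maximum possible cardinality $\min\{q^{m(N-d+1)}, q^{N(m-d+1)}\}$. *)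

(* Defs.v *)
From mathcomp Require Import all_boot all_order all_algebra.
Set Implicit Arguments. Unset Strict Implicit. Unset Printing Implicit Defensive.
Import GRing.Theory.
Local Open Scope ring_scope.

Section Subspaces.
Variable F : fieldType.

(* entry of a matrix at natural-number indices (0 outside the range) *)
Definition mxat m N (A : 'M[F]_(m, N)) (i j : nat) : F :=
  odflt 0 (obind (fun i' : 'I_m => omap (fun j' : 'I_N => A i' j') (insub j))
                 (insub i)).

(* subspaces of F^n are represented by their canonical row-space matrix
   <<A>>%MS : 'M_n ; the row space R(A) of A : 'M_(m,n) is <<A>>%MS *)
Definition rowsp m n (A : 'M[F]_(m, n)) : 'M[F]_n := <<A>>%MS.

Definition inj_dist n (U V : 'M[F]_n) : nat :=
  (\rank (U + V)%MS - minn (\rank U) (\rank V))%N.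

Definition rank_dist m N (A B : 'M[F]_(m, N)) : nat := \rank (A - B).

(* lifting I(C) = R(I_r | C) for C : r x (n-r) *)
Definition lift_mx r n (C : 'M[F]_(r, n - r)) : 'M[F]_(r, n) :=
  \matrix_(i < r, j < n)
    if (j < r)%N then (i == j :> nat)%:R else mxat C i (j - r).

(* generator matrix
   ( I_{r-kd}  C   0        D'  )
   ( 0         0   I_{kd}   D'' )  of size r x n *)
Definition Ek_mx r n d k (C : 'M[F]_(r - k * d, k * d))
    (D : 'M[F]_(r, n - r - k * d)) : 'M[F]_(r, n) :=
  \matrix_(i < r, j < n)
    let a := (r - k * d)%N in
    if (i < a)%N then
      (if (j < a)%N then (i == j :> nat)%:R
       else if (j < r)%N then mxat C i (j - a)
       else if (j < r + k * d)%N then 0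
       else mxat D i (j - r - k * d))
    else
      (if (j < r)%N then 0
       else if (j < r + k * d)%N then ((i - a)%N == (j - r)%N)%:R
       else mxat D i (j - r - k * d)).

End Subspaces.

Section Codes.
Variable F : finFieldType.

Definition min_rank_dist m N (S : {set 'M[F]_(m, N)}) (d : nat) : Prop :=
  (forall A B, A \in S -> B \in S -> A != B -> (d <= rank_dist A B)%N) /\
  (exists A B, [/\ A \in S, B \in S, A != B & rank_dist A B = d]).

Definition MRD m N (S : {set 'M[F]_(m, N)}) (d : nat) : Prop :=
  min_rank_dist S d /\
  #|S| = minn (#|F| ^ (m * (N - d + 1))) (#|F| ^ (N * (m - d + 1))).

Definition in_E r n d (M : {set 'M[F]_(r, n - r)})
    (C : forall k, {set 'M[F]_(r - k * d, k * d)})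
    (D : forall k, {set 'M[F]_(r, n - r - k * d)}) (U : 'M[F]_n) : Prop :=
  (exists2 X, X \in M & U = rowsp (lift_mx X)) \/
  (exists k, [/\ (1 <= k)%N, (k <= r %/ d)%N &
     exists X Y, [/\ X \in C k, Y \in D k & U = rowsp (Ek_mx X Y)]]).

End Codes.

(* Main.v *)
Require Import Defs.
From mathcomp Require Import all_boot all_order all_algebra.
From mathcomp Require Import zify.
Set Implicit Arguments. Unset Strict Implicit. Unset Printing Implicit Defensive.
Import GRing.Theory.
Local Open Scope ring_scope.

Lemma mxatE (F : fieldType) m N (A : 'M[F]_(m,N)) (i : 'I_m) (j : 'I_N) : mxat A i j = A i j.
Proof. by rewrite /mxat !valK. Qed.

Lemma rank_full (F : fieldType) r n (G : 'M[F]_(r,n)) (P : 'M_(n, r)) :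
  G *m P = 1%:M -> \rank G = r.
Proof.
move=> GP; apply/eqP; rewrite eqn_leq rank_leq_row /=.
by rewrite -{1}(mxrank1 F r) -GP mxrankM_maxl.
Qed.

Lemma inj_distE (F : fieldType) r n (G1 G2 : 'M[F]_(r,n)) :
  \rank G1 = r -> \rank G2 = r ->
  inj_dist (rowsp G1) (rowsp G2) = (r - \rank (rowsp G1 :&: rowsp G2))%MS%N.
Proof.
move=> h1 h2; rewrite /inj_dist /rowsp.
have := mxrank_sum_cap <<G1>>%MS <<G2>>%MS.
rewrite !genmxE h1 h2 minnn.
have := rank_leq_col (<<G1>> :&: <<G2>>)%MS.
have : (\rank (<<G1>> :&: <<G2>>)%MS <= \rank G1)%N by apply: mxrankS; apply: submx_trans (capmxSl _ _) _; rewrite genmxE.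
rewrite h1; lia.
Qed.

Lemma L1 (F : fieldType) r n (G1 G2 : 'M[F]_(r,n)) (P : 'M_(n, r)) :
  G1 *m P = 1%:M -> G2 *m P = 1%:M ->
  inj_dist (rowsp G1) (rowsp G2) = \rank (G1 - G2).
Proof.
move=> h1 h2; have r1 := rank_full h1; have r2 := rank_full h2.
rewrite inj_distE // /rowsp.
set W := (<<G1>> :&: <<G2>>)%MS.
have hW1 : (W <= G1)%MS by apply: submx_trans (capmxSl _ _) _; rewrite genmxE.
have hW2 : (W <= G2)%MS by apply: submx_trans (capmxSr _ _) _; rewrite genmxE.
have e1 : W *m P *m G1 = W.
  by case/submxP: hW1 => Z ->; rewrite -(mulmxA Z) h1 mulmx1.
have e2 : W *m P *m G2 = W.
  by case/submxP: hW2 => Z ->; rewrite -(mulmxA Z) h2 mulmx1.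
have le1 : (\rank W <= r - \rank (G1 - G2)%R)%N.
  rewrite -mxrank_ker -{1}e1; apply: leq_trans (mxrankM_maxl _ _) _.
  apply: mxrankS; apply/sub_kermxP.
  by rewrite mulmxBr e1 e2 subrr.
have le2 : (r - \rank (G1 - G2)%R <= \rank W)%N.
  have rf : row_free G1 by rewrite /row_free r1.
  rewrite -mxrank_ker -(mxrankMfree _ rf).
  apply: mxrankS; rewrite sub_capmx !genmxE submxMl /=.
  have -> : kermx (G1 - G2) *m G1 = kermx (G1 - G2) *m G2.
    by apply/eqP; rewrite -subr_eq0 -mulmxBr mulmx_ker.
  exact: submxMl.
have := rank_leq_row (G1 - G2).
lia.
Qed.

Lemma mul_pidr (F : fieldType) m r a (A : 'M[F]_(m, r)) :
  A *m pid_mx a = \matrix_(i, j) (A i j *+ (j < a)%N).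
Proof.
apply/matrixP => i j; rewrite !mxE (bigD1 j) //= big1 ?addr0.
  by rewrite mxE eqxx /= mulr_natr.
move=> k nkj; rewrite mxE (_ : (k == j :> nat) = false) ?mulr0 //.
exact: negPf nkj.
Qed.

Lemma mul_pidl (F : fieldType) m r a (A : 'M[F]_(r, m)) :
  pid_mx a *m A = \matrix_(i, j) (A i j *+ (i < a)%N).
Proof.
apply/matrixP => i j; rewrite !mxE (bigD1 i) //= big1 ?addr0.
  by rewrite mxE eqxx /= mulr_natl.
move=> k nkj; rewrite mxE (_ : (i == k :> nat) = false) ?mul0r //.
by apply: negPf; rewrite eq_sym.
Qed.

Lemma L2 (F : fieldType) r n (G1 G2 : 'M[F]_(r,n)) (f g : 'I_r -> 'I_n) a1 a2 :
  G1 *m colsub f 1%:M = 1%:M -> \rank G2 = r ->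
  (forall l : 'I_r, (l < a1)%N -> f l = g l) ->
  (forall (i j : 'I_r), (a2 <= i)%N -> G2 i (g j) = 0) ->
  (a1 <= r)%N -> (a2 <= r)%N ->
  (a1 - a2 <= inj_dist (rowsp G1) (rowsp G2))%N.
Proof.
move=> h1 r2 hfg hz ha1 ha2; have r1 := rank_full h1.
rewrite inj_distE // /rowsp.
set W := (<<G1>> :&: <<G2>>)%MS.
set P := colsub f 1%:M in h1; pose Q : 'M[F]_(n, r) := colsub g 1%:M.
have hW1 : (W <= G1)%MS by apply: submx_trans (capmxSl _ _) _; rewrite genmxE.
have hW2 : (W <= G2)%MS by apply: submx_trans (capmxSr _ _) _; rewrite genmxE.
have e1 : W *m P *m G1 = W.
  by case/submxP: hW1 => Z ->; rewrite -(mulmxA Z) h1 mulmx1.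
have ePQ : P *m (pid_mx a1 : 'M_r) = Q *m pid_mx a1.
  rewrite !mul_pidr; apply/matrixP => i j; rewrite !mxE.
  by case: (boolP (j < a1)%N) => [/hfg -> //| _]; rewrite !mulr0n.
have eG2 : G2 *m Q = pid_mx a2 *m (G2 *m Q).
  rewrite /Q !mulmx_colsub mulmx1 mul_pidl; apply/matrixP => i j; rewrite !mxE.
  by case: (ltnP i a2) => [_|/hz ->]; rewrite ?mulr1n ?mul0rn.
have le : (\rank W <= a2 + (r - a1))%N.
  rewrite -{1}e1; apply: leq_trans (mxrankM_maxl _ _) _.
  have -> : W *m P = W *m P *m pid_mx a1 + W *m P *m copid_mx a1.
    by rewrite /copid_mx mulmxBr mulmx1 addrC subrK.
  apply: leq_trans (mxrank_add _ _) _; apply: leq_add.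
    rewrite -mulmxA ePQ mulmxA; apply: leq_trans (mxrankM_maxl _ _) _.
    apply: leq_trans (_ : \rank (G2 *m Q) <= _)%N.
      by apply: mxrankS; apply: submxMr.
    rewrite eG2; apply: leq_trans (mxrankM_maxl _ _) _.
    by rewrite rank_pid_mx.
  by apply: leq_trans (mxrankM_maxr _ _) _; rewrite rank_copid_mx.
lia.
Qed.

Definition ordof n (o : 'I_n) (k : nat) : 'I_n := insubd o k.
Lemma ordofE n (o : 'I_n) k : (k < n)%N -> nat_of_ord (ordof o k) = k.
Proof. by move=> h; rewrite /ordof val_insubd h. Qed.

Definition piv n r a (o : 'I_n) (l : 'I_r) : 'I_n :=
  ordof o (if (l < a)%N then nat_of_ord l else (l - a + r)%N).

Lemma pivE n r a (o : 'I_n) (l : 'I_r) : (r + r <= n)%N -> (a <= r)%N ->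
  nat_of_ord (piv a o l) = if (l < a)%N then nat_of_ord l else (l - a + r)%N.
Proof. move=> h1 h2; rewrite ordofE //; have := ltn_ord l; case: ifP; lia. Qed.

Ltac crush := repeat (first [case: ifP => ? | case: eqP => ?]); try lia.

Lemma C2 (F : fieldType) n r d k (o : 'I_n) (X : 'M[F]_(r - k * d, k * d))
  (Y : 'M[F]_(r, n - r - k * d)) :
  (r + r <= n)%N -> (k * d <= r)%N ->
  Ek_mx X Y *m colsub (piv (r - k * d) o) 1%:M = 1%:M.
Proof.
move=> hn hk; rewrite mulmx_colsub mulmx1; apply/matrixP => i j.
rewrite !mxE pivE; last lia; last lia.
have := ltn_ord i; have := ltn_ord j; rewrite -val_eqE /= => ? ?.
have [hj|hj] := ltnP j (r - k * d)%N; crush; done.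
Qed.

Lemma rank_colsub (F : fieldType) m n p (g : 'I_p -> 'I_n) (A : 'M[F]_(m, n)) :
  (\rank (colsub g A) <= \rank A)%N.
Proof.
by rewrite -[A in colsub _ A]mulmx1 -mulmx_colsub; apply: mxrankM_maxl.
Qed.

Lemma rank_rowsub (F : fieldType) m n p (f : 'I_p -> 'I_m) (A : 'M[F]_(m, n)) :
  (\rank (rowsub f A) <= \rank A)%N.
Proof. by apply: mxrankS; apply: rowsub_sub. Qed.

Lemma Clift (F : fieldType) n r (o : 'I_n) (X : 'M[F]_(r, n - r)) :
  (r + r <= n)%N -> lift_mx X *m colsub (piv r o) 1%:M = 1%:M.
Proof.
move=> hn; rewrite mulmx_colsub mulmx1; apply/matrixP => i j.
rewrite !mxE pivE //; have := ltn_ord i; have := ltn_ord j; rewrite -val_eqE /= => ? ?.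
rewrite !ltn_ord; crush; done.
Qed.

Lemma Czero (F : fieldType) n r d k (o : 'I_n) (X : 'M[F]_(r - k * d, k * d))
  (Y : 'M[F]_(r, n - r - k * d)) (i j : 'I_r) :
  (r + r <= n)%N -> (r - k * d <= i)%N -> Ek_mx X Y i (piv r o j) = 0.
Proof.
move=> hn hi; rewrite !mxE pivE //; have := ltn_ord i; have := ltn_ord j => ? ?.
rewrite !ltn_ord /=; crush; done.
Qed.

Lemma Cpiv n r a (o : 'I_n) (l : 'I_r) : (r + r <= n)%N -> (a <= r)%N ->
  (l < a)%N -> piv a o l = piv r o l.
Proof.
move=> hn ha hl; apply: val_inj => /=; rewrite !pivE //.
by have := ltn_ord l; crush.
Qed.

Lemma C4 (F : fieldType) n r (o : 'I_n) (X1 X2 : 'M[F]_(r, n - r)) :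
  (r + r <= n)%N -> (\rank (X1 - X2)%R <= \rank (lift_mx X1 - lift_mx X2)%R)%N.
Proof.
move=> hn.
have -> : X1 - X2 = colsub (fun j : 'I_(n - r) => ordof o (j + r)) (lift_mx X1 - lift_mx X2).
  apply/matrixP => i j; rewrite !mxE !ordofE; last by have := ltn_ord j; lia.
  by rewrite ltnNge leq_addl /= addnK !mxatE.
exact: rank_colsub.
Qed.

Lemma C5 (F : fieldType) n r (X1 X2 : 'M[F]_(r, n - r)) :
  (r + r <= n)%N -> (\rank (lift_mx X1 - lift_mx X2)%R <= \rank (X1 - X2)%R)%N.
Proof.
move=> hn.
pose R : 'M[F]_(n - r, n) := \matrix_(j', j) ((nat_of_ord j == (j' + r)%N))%:R.
have -> : lift_mx X1 - lift_mx X2 = (X1 - X2) *m R; last exact: mxrankM_maxl.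
apply/matrixP => i j; rewrite !mxE.
case: ltnP => hj.
  rewrite subrr big1 // => j' _; rewrite !mxE.
  by rewrite (_ : (nat_of_ord j == (j' + r)%N) = false) ?mulr0 //; apply/eqP; lia.
have hj0 : (j - r < n - r)%N by have := ltn_ord j; lia.
rewrite (bigD1 (Ordinal hj0)) //= big1 ?addr0.
  rewrite !mxE /= (_ : (nat_of_ord j == (j - r + r)%N) = true) ?mulr1; last by apply/eqP; lia.
  by have := mxatE X1 i (Ordinal hj0); have := mxatE X2 i (Ordinal hj0); rewrite /= => -> ->.
move=> j' hne; rewrite !mxE (_ : (nat_of_ord j == (j' + r)%N) = false) ?mulr0 //.
apply/eqP => hjj; move: hne; rewrite -val_eqE /=; lia.
Qed.

Lemma C6 (F : fieldType) n r d k (o : 'I_n) (or : 'I_r) (X1 X2 : 'M[F]_(r - k * d, k * d))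
  (Y1 Y2 : 'M[F]_(r, n - r - k * d)) :
  (r + r <= n)%N -> (k * d <= r)%N ->
  (\rank (X1 - X2)%R <= \rank (Ek_mx X1 Y1 - Ek_mx X2 Y2)%R)%N.
Proof.
move=> hn hk.
have -> : X1 - X2 = rowsub (fun i : 'I_(r - k * d) => ordof or i)
   (colsub (fun j : 'I_(k * d) => ordof o (j + (r - k * d))) (Ek_mx X1 Y1 - Ek_mx X2 Y2)).
  apply/matrixP => i j; rewrite !mxE !ordofE /=;
    try (by have := ltn_ord i; have := ltn_ord j; lia).
  have := ltn_ord i; have := ltn_ord j => ? ?.
  rewrite (_ : (j + (r - k * d) < r - k * d)%N = false); last lia.
  rewrite (_ : (j + (r - k * d) < r)%N = true); last lia.
  by rewrite addnK ltn_ord !mxatE.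
by apply: leq_trans (rank_rowsub _ _) (rank_colsub _ _).
Qed.

Lemma C7 (F : fieldType) n r d k (o : 'I_n) (X1 X2 : 'M[F]_(r - k * d, k * d))
  (Y1 Y2 : 'M[F]_(r, n - r - k * d)) :
  (r + r <= n)%N ->
  (\rank (Y1 - Y2)%R <= \rank (Ek_mx X1 Y1 - Ek_mx X2 Y2)%R)%N.
Proof.
move=> hn.
have -> : Y1 - Y2 = colsub (fun j : 'I_(n - r - k * d) => ordof o (j + r + k * d)) (Ek_mx X1 Y1 - Ek_mx X2 Y2).
  apply/matrixP => i j; rewrite !mxE !ordofE; last by have := ltn_ord j; lia.
  have := ltn_ord i; have := ltn_ord j => ? ?.
  rewrite (_ : (j + r + k * d - r - k * d)%N = j); last lia.
  rewrite !mxatE (_ : (j + r + k * d < r)%N = false); last lia.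
  rewrite (_ : (j + r + k * d < r + k * d)%N = false); last lia.
  rewrite /= (_ : (j + r + k * d < r - k * d)%N = false); last lia.
  by case: ifP.
exact: rank_colsub.
Qed.

Lemma inj_distC (F : fieldType) n (U V : 'M[F]_n) : inj_dist U V = inj_dist V U.
Proof. by rewrite /inj_dist minnC addsmxC. Qed.

Local Close Scope ring_scope.

Theorem proposition1 (F : finFieldType) (n r d : nat)
  (hd1 : (1 <= d)%N) (hdr : (d <= r)%N) (hrn : (2 * r <= n)%N)
  (M : {set 'M[F]_(r, n - r)})
  (hM : MRD M d) (hMcard : #|M| = (#|F| ^ ((n - r) * (r - d + 1)))%N)
  (C : forall k, {set 'M[F]_(r - k * d, k * d)})
  (hC : forall k, (1 <= k)%N -> (k < r %/ d)%N -> MRD (C k) d)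
  (hC0 : C (r %/ d)%N = [set 0%R])
  (D : forall k, {set 'M[F]_(r, n - r - k * d)})
  (hD : forall k, (1 <= k)%N -> (k < (n - r) %/ d)%N -> MRD (D k) d)
  (hD0 : D ((n - r) %/ d)%N = [set 0%R]) :
  (forall U V, in_E M C D U -> in_E M C D V -> U != V ->
     (d <= inj_dist U V)%N) /\
  (exists U V, [/\ in_E M C D U, in_E M C D V, U != V & inj_dist U V = d]).
Proof.
have hn : r + r <= n by lia.
have n0 : 0 < n by lia.
have r0 : 0 < r by lia.
pose o : 'I_n := Ordinal n0.
pose or : 'I_r := Ordinal r0.
have hkd : forall k, k <= r %/ d -> k * d <= r.
  move=> k hk; apply: leq_trans (leq_divM r d); exact: leq_mul hk (leqnn d).
have hdiv : r %/ d <= (n - r) %/ d by apply: leq_div2r; lia.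
have liftE : forall X Y : 'M[F]_(r, n - r),
    inj_dist (rowsp (lift_mx X)) (rowsp (lift_mx Y)) = \rank (X - Y)%R.
  move=> X Y; rewrite (L1 (Clift o X hn) (Clift o Y hn)).
  by apply/eqP; rewrite eqn_leq C5 // C4.
split; last first.
  case: hM => [[_ [A [B [hA hB hAB hd]]]] _].
  exists (rowsp (lift_mx A)), (rowsp (lift_mx B)); split.
  - by left; exists A.
  - by left; exists B.
  - apply/negP => /eqP e; move: (liftE A B); rewrite e liftE subrr mxrank0.
    by move: hd; rewrite /rank_dist => ->; lia.
  - by rewrite liftE.
have cross : forall k1 k2 (G1 G2 : 'M[F]_(r, n)), k1 < k2 -> k2 <= r %/ d ->
    (G1 *m colsub (piv (r - k1 * d) o) 1%:M)%R = 1%:M%R ->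
    (G2 *m colsub (piv (r - k2 * d) o) 1%:M)%R = 1%:M%R ->
    (forall i j : 'I_r, r - k2 * d <= i -> G2 i (piv r o j) = 0%R) ->
    d <= inj_dist (rowsp G1) (rowsp G2).
  move=> k1 k2 G1 G2 hk hk2 h1 h2 hz.
  have hk2d := hkd _ hk2.
  have hk1d : k1 * d <= r by apply: hkd; lia.
  have hm : k1.+1 * d <= k2 * d by exact: leq_mul hk (leqnn d).
  apply: leq_trans _ (L2 (a1 := r - k1 * d) h1 (rank_full h2) _ hz _ _); first by rewrite mulSn in hm; lia.
  - by move=> l hl; apply: Cpiv => //; lia.
  - lia.
  - lia.
have liftP : forall X : 'M[F]_(r, n - r),
    (lift_mx X *m colsub (piv (r - 0 * d) o) 1%:M)%R = 1%:M%R.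
  by move=> X; rewrite mul0n subn0; apply: Clift.
move=> U V hU hV.
case: hU => [[X hX ->]|[k1 [hk1 hk1r [X1 [Y1 [hX1 hY1 ->]]]]]];
case: hV => [[Y hY ->]|[k2 [hk2 hk2r [X2 [Y2 [hX2 hY2 ->]]]]]] hne.
- rewrite liftE; case: hM => [[hM1 _] _]; apply: hM1 => //.
  by apply: (contraNneq _ hne) => ->.
- apply: (cross 0 k2) => //; first exact: C2 (hkd _ hk2r).
  by move=> i j hi; apply: Czero.
- rewrite inj_distC; apply: (cross 0 k1) => //; first exact: C2 (hkd _ hk1r).
  by move=> i j hi; apply: Czero.
- case: (ltngtP k1 k2) => hk12.
  + apply: (cross k1 k2) => //; try exact: C2 (hkd _ _).
    by move=> i j hi; apply: Czero.
  + rewrite inj_distC; apply: (cross k2 k1) => //; try exact: C2 (hkd _ _).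
    by move=> i j hi; apply: Czero.
  subst k2.
  rewrite (L1 (C2 o X1 Y1 hn (hkd _ hk1r)) (C2 o X2 Y2 hn (hkd _ hk1r))).
  have [eX|nX] := eqVneq X1 X2.
    subst X2.
    have nY : Y1 != Y2 by apply: (contraNneq _ hne) => ->.
    apply: leq_trans (C7 o X1 X1 Y1 Y2 hn).
    case: (ltnP k1 ((n - r) %/ d)) => hkn.
      by case: (hD k1 hk1 hkn) => [[hD1 _] _]; apply: hD1.
    have ek : k1 = (n - r) %/ d by lia.
    subst k1; move: hY1 hY2 nY; rewrite hD0 !inE => /eqP -> /eqP ->.
    by rewrite eqxx.
  apply: leq_trans _ (C6 o or X1 X2 Y1 Y2 hn (hkd _ hk1r)).
  case: (ltnP k1 (r %/ d)) => hkn.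
    by case: (hC k1 hk1 hkn) => [[hC1 _] _]; apply: hC1.
  have ek : k1 = r %/ d by lia.
  subst k1; move: hX1 hX2 nX; rewrite hC0 !inE => /eqP -> /eqP ->.
  by rewrite eqxx.
Qed.
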